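(* Let $\mathcal P$ be a reduced operad over $\mathbf{k}$, let $V$ be a $\mathbf{k}$-module and let $\lambda\in\mathbf{k}$. Consider the free $\mathcal P$-algebra $\mathcal P(V)=\bigoplus_{n\ge 1}\mathcal P(n)\otimes_{S_n}V^{\otimes n}$ with the embedding $V\hookrightarrow\mathcal P(V)$. Then restriction to $V$ gives a bijection $$\mathrm{Diff}_\lambda(\mathcal P(V))\;\cong\;\mathrm{Hom}_{\mathbf{k}}(V,\mathcal P(V)),$$ where $\mathrm{Diff}_\lambda(\mathcal P(V))$ is the set of derivations of weight $\lambda$ on $\mathcal P(V)$. More precisely, for every linear map $\phi:V\to\mathcal P(V)$ there is a unique derivation $d_\phi$ of weight $\lambda$ on $\mathcal P(V)$ whose restriction to $V$ is $\phi$, and it is given, for all $n\ge1$, $f\in\mathcal P(n)$ and $v_1,\dots,v_n\in V$, by $$d_\phi\big(f(v_1,\dots,v_n)\big)=\sum_{k=1}^{n}\lambda^{k-1}\sum_{1\le i_1<\dots<i_k\le n} f\big(v_1,\dots,\phi(v_{i_1}),\dots,\phi(v_{i_k}),\dots,v_n\big),$$ where $\phi$ is applied exactly at the positions $i_1,\dots,i_k$ and the right-hand side is evaluated using the $\mathcal P$-algebra structure of $\mathcal P(V)$ (i.e. the operadic composition $\gamma$).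
   Context: $\mathbf{k}$ is a commutative unital ring. An operad $\mathcal P=\{\mathcal P(n)\}_{n\ge0}$ is a collection of right $S_n$-modules with an associative and unital composition $\gamma:\mathcal P\circ\mathcal P\to\mathcal P$ and unit $\eta:I\to\mathcal P$ (in the sense of Loday–Vallette); it is reduced if $\mathcal P(0)=0$. For a module $A$, $\mathcal P(A)=\bigoplus_n\mathcal P(n)\otimes_{S_n}A^{\otimes n}$; a $\mathcal P$-algebra is a module $A$ with a structure map $\gamma_A:\mathcal P(A)\to A$ compatible with $\gamma$ and $\eta$; for $f\in\mathcal P(n)$ write $f(a_1,\dots,a_n)=\gamma_A(f\otimes a_1\otimes\dots\otimes a_n)$. For a module $V$, $\mathcal P(V)$ with structure map induced by $\gamma$ is the free $\mathcal P$-algebra on $V$. Given $\lambda\in\mathbf{k}$ and a $\mathcal P$-algebra $A$, a linear map $d:A\to A$ is a derivation of weight $\lambda$ if for all $n\ge1$, $f\in\mathcal P(n)$, $a_1,\dots,a_n\in A$: $$d\big(f(a_1,\dots,a_n)\big)=\sum_{k=1}^{n}\lambda^{k-1}\sum_{1\le i_1<\dots<i_k\le n}f\big(a_1,\dots,d(a_{i_1}),\dots,d(a_{i_k}),\dots,a_n\big),$$ with $d$ applied exactly at positions $i_1,\dots,i_k$. (For associative algebras this is $d(ab)=d(a)b+ad(b)+\lambda d(a)d(b)$.) *)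

(* Defs.v *)
From HB Require Import structures.
From mathcomp Require Import all_boot all_order all_fingroup all_algebra.
Set Implicit Arguments. Unset Strict Implicit. Unset Printing Implicit Defensive.
Import Order.TTheory GRing.Theory.
Local Open Scope ring_scope.

Definition is_lin (k : pzRingType) (U W : lmodType k) (h : U -> W) : Prop :=
  forall (c : k) (x y : U), h (c *: x + y) = c *: h x + h y.

Definition castT (T : nat -> Type) (m n : nat) (e : m = n) (x : T m) : T n :=
  eq_rect m T x n e.

(* Block indexing: for arities ar : 'I_m -> nat, the l-th position of the
   i-th block inside 'I_(ar 0 + ... + ar (m-1)), i.e. the position
   ar 0 + ... + ar (i-1) + l. *)
Lemma blk_subproof (m : nat) (ar : 'I_m -> nat) (i : 'I_m) (l : 'I_(ar i)) :
  (\sum_(j < m | (j < i)%N) ar j + l < \sum_(j < m) ar j)%N.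
Proof.
apply: (@leq_trans (\sum_(j < m | (j < i)%N) ar j + ar i)%N).
  by rewrite ltn_add2l.
rewrite [X in (_ <= X)%N](bigD1 i) //= [X in (_ <= X)%N]addnC leq_add2r.
apply: sub_le_big; try (move=> *; by rewrite ?leq_addr).
by move=> j ji; rewrite neq_ltn ji.
Qed.

Definition blk (m : nat) (ar : 'I_m -> nat) (i : 'I_m) (l : 'I_(ar i))
  : 'I_(\sum_(j < m) ar j) := Ordinal (blk_subproof l).

(* Operads (classical / "unfolded" form of the Loday-Vallette notion)  *)
(* Right action convention (mathcomp: (s * t) x = t (s x)):             *)
(*   f.(s*t) = (f.s).t ; on algebras (f.s)(a_1..a_n) = f(a_s1..a_sn).   *)

Record operad (k : comPzRingType) := Operad {
  op : nat -> lmodType k;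
  op_act : forall n, 'S_n -> op n -> op n;
  op_unit : op 1;
  op_gamma : forall (m : nat) (ar : 'I_m -> nat),
      op m -> (forall i : 'I_m, op (ar i)) -> op (\sum_(i < m) ar i);
  op_act_lin : forall n (s : 'S_n), is_lin (op_act s);
  op_act1 : forall n (f : op n), op_act 1%g f = f;
  op_actM : forall n (s t : 'S_n) (f : op n),
      op_act (s * t)%g f = op_act t (op_act s f);
  op_gamma_lin_l : forall m (ar : 'I_m -> nat) (g : forall i, op (ar i)),
      is_lin (fun f : op m => op_gamma f g);
  op_gamma_lin_r : forall m (ar : 'I_m -> nat) (f : op m)
      (g : forall i, op (ar i)) (i : 'I_m),
      is_lin (fun x : op (ar i) => op_gamma f (dfwith g x));
  op_unit_l : forall n (f : op n) (e : (\sum_(i < 1) n)%N = n),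
      @castT op _ _ e (op_gamma (ar := fun _ => n) op_unit (fun _ => f)) = f;
  op_unit_r : forall n (f : op n) (e : (\sum_(i < n) 1)%N = n),
      @castT op _ _ e (op_gamma (ar := fun _ => 1%N) f (fun _ => op_unit)) = f;
  op_assoc : forall m (ar : 'I_m -> nat) (f : op m) (g : forall i, op (ar i))
      (ar2 : 'I_(\sum_(i < m) ar i) -> nat) (h : forall j, op (ar2 j))
      (e : (\sum_(j < \sum_(i < m) ar i) ar2 j
            = \sum_(i < m) \sum_(l < ar i) ar2 (blk l))%N),
      @castT op _ _ e (op_gamma (op_gamma f g) h)
      = op_gamma (ar := fun i => (\sum_(l < ar i) ar2 (blk l))%N) f
          (fun i => op_gamma (ar := fun l => ar2 (blk l)) (g i)
                      (fun l => h (blk l)));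
  op_equiv_l : forall m (ar : 'I_m -> nat) (s : 'S_m) (f : op m)
      (g : forall i, op (ar i))
      (e : (\sum_(i < m) ar (s i) = \sum_(i < m) ar i)%N)
      (r : 'S_(\sum_(i < m) ar i)),
      (forall (i : 'I_m) (l : 'I_(ar (s i))),
          r (cast_ord e (blk (ar := fun j => ar (s j)) l)) = blk l) ->
      op_gamma (op_act s f) g
      = op_act r (@castT op _ _ e (op_gamma (ar := fun j => ar (s j)) f
                                 (fun i => g (s i))));
  op_equiv_r : forall m (ar : 'I_m -> nat) (f : op m) (g : forall i, op (ar i))
      (t : forall i, 'S_(ar i)) (r : 'S_(\sum_(i < m) ar i)),
      (forall (i : 'I_m) (l : 'I_(ar i)), r (blk l) = blk (t i l)) ->
      op_gamma f (fun i => op_act (t i) (g i)) = op_act r (op_gamma f g)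
}.

Arguments op {k} P _ : rename.
Arguments op_act {k P n} : rename.
Arguments op_unit {k P} : rename.
Arguments op_gamma {k P m ar} : rename.

Definition reduced (k : comPzRingType) (P : operad k) : Prop :=
  forall x : op P 0, x = 0.

(* P-algebras: gamma_A : P(A) = (+)_n P(n) (x)_{S_n} A^{(x)n} -> A,     *)
(* written out as a family of multilinear, S_n-invariant maps           *)

Record algebra (k : comPzRingType) (P : operad k) := Algebra {
  carrier : lmodType k;
  alg_act : forall n, op P n -> ('I_n -> carrier) -> carrier;
  alg_lin_l : forall n (a : 'I_n -> carrier),
      is_lin (fun f : op P n => alg_act f a);
  alg_lin_r : forall n (f : op P n) (a : 'I_n -> carrier) (i : 'I_n),
      is_lin (fun x : carrier => alg_act f (fun j => if j == i then x else a j));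
  alg_equiv : forall n (s : 'S_n) (f : op P n) (a : 'I_n -> carrier),
      alg_act (op_act s f) a = alg_act f (fun i => a (s i));
  alg_unit : forall a : 'I_1 -> carrier, alg_act op_unit a = a ord0;
  alg_gamma : forall m (ar : 'I_m -> nat) (f : op P m)
      (g : forall i, op P (ar i)) (a : 'I_(\sum_(i < m) ar i) -> carrier),
      alg_act (op_gamma f g) a
      = alg_act f (fun i => alg_act (g i) (fun l => a (blk l)))
}.

Arguments carrier {k P} A : rename.
Arguments alg_act {k P} A {n} : rename.

Definition alg_morph (k : comPzRingType) (P : operad k) (A B : algebra P)
  (h : carrier A -> carrier B) : Prop :=
  is_lin h /\
  forall n (f : op P n) (a : 'I_n -> carrier A),
    h (alg_act A f a) = alg_act B f (fun i => h (a i)).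

Definition is_free_alg (k : comPzRingType) (P : operad k) (V : lmodType k)
  (F : algebra P) (iota : V -> carrier F) : Prop :=
  is_lin iota /\
  forall (B : algebra P) (phi : V -> carrier B), is_lin phi ->
    exists h : carrier F -> carrier B,
      [/\ alg_morph h, (forall v, h (iota v) = phi v) &
          forall h', alg_morph h' -> (forall v, h' (iota v) = phi v) ->
                     forall x, h' x = h x].

(* sum_{k=1}^n lam^(k-1) sum_{i_1<...<i_k} f(a_1,..,d a_{i_1},..,d a_{i_k},..,a_n),
   the inner sum over k-subsets {i_1<...<i_k} of positions *)
Definition weighted_leibniz (k : comPzRingType) (P : operad k) (A : algebra P)
  (lam : k) (n : nat) (f : op P n) (a : 'I_n -> carrier A)
  (da : 'I_n -> carrier A) : carrier A :=
  \sum_(S : {set 'I_n} | S != set0)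
     lam ^+ (#|S|.-1) *: alg_act A f (fun i => if i \in S then da i else a i).

Definition is_derivation (k : comPzRingType) (P : operad k) (A : algebra P)
  (lam : k) (d : carrier A -> carrier A) : Prop :=
  is_lin d /\
  forall n, (0 < n)%N -> forall (f : op P n) (a : 'I_n -> carrier A),
    d (alg_act A f a) = weighted_leibniz lam f a (fun i => d (a i)).

(* Main.v *)
Require Import Defs.
From HB Require Import structures.
From mathcomp Require Import all_boot all_order all_fingroup all_algebra.
From Stdlib Require Import FunctionalExtensionality.
Import GRing.Theory.
Local Open Scope ring_scope.
Set Implicit Arguments. Unset Strict Implicit.

Section Blk.
Variables (m : nat) (ar : 'I_m -> nat).

Lemma pre_mono (i i' : 'I_m) : (i < i')%N ->
  (\sum_(j < m | (j < i)%N) ar j + ar i <= \sum_(j < m | (j < i')%N) ar j)%N.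
Proof.
move=> h; rewrite [X in (_ <= X)%N](bigD1 i) //= [X in (X <= _)%N]addnC leq_add2l.
rewrite [X in (X <= _)%N]big_mkcond [X in (_ <= X)%N]big_mkcond /=.
apply: leq_sum => j _; case: ifP => // ji.
by rewrite (ltn_trans ji h) neq_ltn ji.
Qed.

Lemma blk_eq (i i' : 'I_m) (l : 'I_(ar i)) (l' : 'I_(ar i')) :
  (blk l == blk l') = (i == i') && (val l == val l').
Proof.
case: (ltngtP i i') => h.
- have ne : i != i' by rewrite neq_ltn h.
  rewrite (negbTE ne) /=; apply/eqP => E; have := congr1 val E => /= E'.
  have H2 : (\sum_(j < m | (j < i)%N) ar j + l < \sum_(j < m | (j < i')%N) ar j + l')%N.
    apply: leq_trans (leq_trans (pre_mono h) (leq_addr _ _)).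
    by rewrite ltn_add2l.
  by rewrite E' ltnn in H2.
- have ne : i != i' by rewrite neq_ltn h orbT.
  rewrite (negbTE ne) /=; apply/eqP => E; have := congr1 val E => /= E'.
  have H2 : (\sum_(j < m | (j < i')%N) ar j + l' < \sum_(j < m | (j < i)%N) ar j + l)%N.
    apply: leq_trans (leq_trans (pre_mono h) (leq_addr _ _)).
    by rewrite ltn_add2l.
  by rewrite E' ltnn in H2.
- have e : i = i' by apply: val_inj.
  subst i'; rewrite eqxx /=; rewrite -val_eqE /= eqn_add2l.
  done.
Qed.

Lemma blk_surj (j : 'I_(\sum_(i < m) ar i)) : exists i (l : 'I_(ar i)), blk l = j.
Proof.
pose fT (t : {i : 'I_m & 'I_(ar i)}) := blk (tagged t).
have inj : injective fT.
  move=> [i l] [i' l'] /= /eqP; rewrite /fT /= blk_eq => /andP [/eqP e ll].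
  subst i'; congr Tagged; exact/val_inj/eqP.
have cd : (#|'I_(\sum_(i < m) ar i)| <= #|{: {i : 'I_m & 'I_(ar i)}}|)%N.
  rewrite card_tagged card_ord sumnE big_map big_enum /=.
  by under [X in (_ <= X)%N]eq_bigr do rewrite card_ord.
have := inj_card_onto inj cd j => /codomP [[i l] ->].
by exists i, l.
Qed.

End Blk.

Section Dual.
Variables (k : comPzRingType) (P : operad k) (F : algebra P) (lam : k).

Definition Bt : lmodType k := (carrier F * carrier F)%type.

Definition W n (f : op P n) (x : 'I_n -> Bt) : Bt :=
  (alg_act F f (fun i => (x i).1),
   weighted_leibniz lam f (fun i => (x i).1) (fun i => (x i).2)).

Definition eps (x : Bt) : Bt := (0, x.1 + lam *: x.2).

Definition upd n (x : 'I_n -> Bt) (i : 'I_n) (y : Bt) : 'I_n -> Bt :=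
  fun j => if j == i then y else x j.

Definition slotlin n (M : ('I_n -> Bt) -> Bt) :=
  forall (x : 'I_n -> Bt) (i : 'I_n), (forall (c : k) (p q : Bt), M (upd x i (c *: p + q)) = c *: M (upd x i p) + M (upd x i q))
         /\ (forall p, M (upd x i (eps p)) = eps (M (upd x i p))).

Lemma uniq_slot n (M1 M2 : ('I_n -> Bt) -> Bt) : slotlin M1 -> slotlin M2 ->
  (forall a, M1 (fun j => (a j, 0)) = M2 (fun j => (a j, 0))) -> forall x, M1 x = M2 x.
Proof.
move=> H1 H2 Hp.
suff H : forall m x, (forall j : 'I_n, (m <= j)%N -> (x j).2 = 0) -> M1 x = M2 x.
  by move=> x; apply: (H n) => j; rewrite leqNgt ltn_ord.
elim=> [|m IH] x Hx.
  have -> : x = (fun j => ((x j).1, 0)).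
    by apply: functional_extensionality => j; rewrite -(Hx j) //; case: (x j).
  exact: Hp.
case: (ltnP m n) => hm; last first.
  apply: IH => j hj; exfalso; move: (ltn_ord j); rewrite ltnNge.
  by rewrite (leq_trans hm hj).
pose i := Ordinal hm.
have ex : x = upd x i (1 *: ((x i).1, 0) + eps ((x i).2, 0)).
  apply: functional_extensionality => j; rewrite /upd.
  case: eqP => [->|//]; rewrite scale1r /eps /=; case: (x i) => a b /=.
  rewrite scaler0 !addr0; apply: injective_projections => /=; by rewrite ?addr0 ?add0r.
have Hu : forall y, y.2 = 0 -> forall j : 'I_n, (m <= j)%N -> (upd x i y j).2 = 0.
  move=> y hy j0 hj; rewrite /upd; case: eqP => // /eqP hji.
  apply: Hx; rewrite ltn_neqAle hj andbT; apply: contra hji => /eqP e.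
  by apply/eqP; apply: val_inj; rewrite /= e.
rewrite ex (proj1 (H1 x i)) (proj1 (H2 x i)) (proj2 (H1 x i)) (proj2 (H2 x i)).
by rewrite !IH //; apply: Hu.
Qed.


Lemma lin0 (U X : lmodType k) (h : U -> X) : is_lin h -> h 0 = 0.
Proof. move=> H; have := H (-1) 0 0; rewrite scaler0 addr0 scaleN1r.
by move=> E; rewrite {1}E addNr. Qed.

Lemma alg0 n (f : op P n) (a : 'I_n -> carrier F) i :
  alg_act F f (fun j => if j == i then 0 else a j) = 0.
Proof. exact: (lin0 (alg_lin_r f a i)). Qed.

Lemma upd1 n (x : 'I_n -> Bt) i y :
  (fun j => (upd x i y j).1) = fun j => if j == i then y.1 else (x j).1.
Proof. by apply: functional_extensionality => j; rewrite /upd; case: (j == i). Qed.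

Lemma upd12 n (x : 'I_n -> Bt) i y (S : {set 'I_n}) :
  (fun j => if j \in S then (upd x i y j).2 else (upd x i y j).1) =
  fun j => if j == i then (if i \in S then y.2 else y.1)
           else (if j \in S then (x j).2 else (x j).1).
Proof. by apply: functional_extensionality => j; rewrite /upd; case: eqP => [->|]. Qed.

Lemma W_pure n (f : op P n) (a : 'I_n -> carrier F) :
  W f (fun j => (a j, 0)) = (alg_act F f a, 0).
Proof.
rewrite /W /=; congr (_, _); rewrite /weighted_leibniz big1 // => S /set0Pn [i iS].
have -> : (fun j => if j \in S then 0 else a j)
        = fun j => if j == i then 0 else (if j \in S then 0 else a j).
  by apply: functional_extensionality => j; case: eqP => [->|]; rewrite ?iS.
by rewrite alg0 scaler0.
Qed.

Lemma W_lin_l n (x : 'I_n -> Bt) : is_lin (fun f : op P n => W f x).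
Proof.
move=> c f g; rewrite /W; apply: injective_projections => /=.
  by rewrite alg_lin_l.
rewrite /weighted_leibniz scaler_sumr -big_split; apply: eq_bigr => S _ /=.
by rewrite alg_lin_l scalerDr !scalerA mulrC.
Qed.


Lemma comb n (H : {set 'I_n} -> carrier F -> carrier F) (i : 'I_n) (u v : carrier F)
  (Hl : forall S (c : k) a b, H S (c *: a + b) = c *: H S a + H S b)
  (H0 : forall S, H S 0 = 0) (Hoff : forall T, H (i |: T) = H T) :
  \sum_(S : {set 'I_n} | S != set0) lam ^+ (#|S|.-1) *: H S (if i \in S then u + lam *: v else 0)
  = H set0 u + lam *: \sum_(S : {set 'I_n} | S != set0)
                          lam ^+ (#|S|.-1) *: H S (if i \in S then v else u).
Proof.
pose T (S : {set 'I_n}) := lam ^+ #|S| *: H S (if i \in S then v else u).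
have R : \sum_(S : {set 'I_n}) T S = H set0 u + lam *: \sum_(S : {set 'I_n} | S != set0)
                          lam ^+ (#|S|.-1) *: H S (if i \in S then v else u).
  rewrite (bigD1 set0) //= /T cards0 expr0 scale1r in_set0 scaler_sumr; congr (_ + _).
  by apply: eq_bigr => S hS; rewrite scalerA -exprS prednK ?card_gt0.
rewrite -R (bigID (fun S : {set 'I_n} => i \in S)) /= [X in _ + X = _]big1 ?addr0; last first.
  by move=> S /andP [_ h]; rewrite (negbTE h) H0 scaler0.
have L : \sum_(S : {set 'I_n} | (S != set0) && (i \in S))
    lam ^+ (#|S|.-1) *: H S (if i \in S then u + lam *: v else 0)
  = \sum_(S : {set 'I_n} | i \in S) (T S + lam ^+ (#|S|.-1) *: H S u).
  apply: eq_big => S.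
    case: (boolP (i \in S)) => h; rewrite ?andbF ?andbT //.
    by apply/set0Pn; exists i.
  move=> /andP [hS iS]; rewrite iS addrC Hl scalerDr scalerA /T iS.
  by rewrite -exprSr prednK ?card_gt0.
rewrite L big_split /= [RHS](bigID (fun S : {set 'I_n} => i \in S)) /=; congr (_ + _).
rewrite (reindex_onto (fun T => i |: T) (fun S => S :\ i)) /=; last first.
  by move=> S iS; rewrite setD1K.
apply: eq_big => X.
  rewrite setU11 /=; case: (boolP (i \in X)) => h /=; last by rewrite setU1K ?eqxx.
  apply/eqP => E; have : i \in (i |: X) :\ i by rewrite E.
  by rewrite !inE eqxx.
move=> /andP [_ /eqP E]; have h : i \notin X by rewrite -E !inE eqxx.
by rewrite /T (negbTE h) cardsU1 h add1n /= Hoff.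
Qed.



Lemma W_slot n (f : op P n) : slotlin (W f).
Proof.
move=> x i; split.
  move=> c p q; rewrite /W; apply: injective_projections => /=.
    by rewrite !upd1 /= alg_lin_r.
  rewrite /weighted_leibniz scaler_sumr -big_split; apply: eq_bigr => S _ /=.
  rewrite !upd12; case: (i \in S) => /=;
  by rewrite alg_lin_r scalerDr !scalerA mulrC.
move=> p; rewrite /W; apply: injective_projections => /=.
  by rewrite upd1 /= alg0.
pose H (S : {set 'I_n}) y := alg_act F f (fun j => if j == i then y
                               else (if j \in S then (x j).2 else (x j).1)).
have E0 : alg_act F f (fun j => (upd x i p j).1) = H set0 p.1.
  rewrite upd1 /H; congr (alg_act F f); apply: functional_extensionality => j.
  by rewrite in_set0.
rewrite /weighted_leibniz. under eq_bigr => S _ do rewrite upd12. under [in RHS]eq_bigr => S _ do rewrite upd12.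
rewrite E0; refine (@comb n H i p.1 p.2 _ _ _).
- move=> S c a b; exact: alg_lin_r.
- by move=> S; rewrite /H alg0.
- move=> T; apply: functional_extensionality => y; rewrite /H; congr (alg_act F f); apply: functional_extensionality => j.
  by case: eqP => // /eqP ji; rewrite !inE (negbTE ji).
Qed.


Lemma gamma_slot m (ar : 'I_m -> nat) (f : op P m) (g : forall i, op P (ar i)) :
  slotlin (fun x => W f (fun i => W (g i) (fun l => x (blk l)))).
Proof.
move=> x j; case: (blk_surj j) => i0 [l0 <-].
have key : forall y, (fun i => W (g i) (fun l => upd x (blk l0) y (blk l)))
  = upd (fun i => W (g i) (fun l => x (blk l))) i0
        (W (g i0) (upd (fun l => x (blk l)) l0 y)).
  move=> y; apply: functional_extensionality => i; rewrite /upd.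
  case: (eqVneq i i0) => [e|ne].
    subst i; congr (W _ _); apply: functional_extensionality => l.
    by rewrite blk_eq eqxx /= val_eqE.
  congr (W _ _); apply: functional_extensionality => l.
  by rewrite blk_eq (negbTE ne).
split.
  move=> c p q; rewrite !key (proj1 (W_slot _ _ _)) (proj1 (W_slot _ _ _)) //.
move=> p; rewrite !key (proj2 (W_slot _ _ _)) (proj2 (W_slot _ _ _)) //.
Qed.

Lemma perm_slot n (s : 'S_n) (f : op P n) :
  slotlin (fun x => W f (fun i => x (s i))).
Proof.
move=> x j.
have key : forall y, (fun i => upd x j y (s i)) = upd (fun i => x (s i)) ((s^-1)%g j) y.
  move=> y; apply: functional_extensionality => i; rewrite /upd.
  by rewrite -[i == _](inj_eq (@perm_inj _ s)) permKV.
split.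
  by move=> c p q; rewrite !key (proj1 (W_slot _ _ _)).
by move=> p; rewrite !key (proj2 (W_slot _ _ _)).
Qed.

Lemma W_equiv n (s : 'S_n) (f : op P n) (x : 'I_n -> Bt) :
  W (op_act s f) x = W f (fun i => x (s i)).
Proof.
apply: (uniq_slot (M1 := fun x => W (op_act s f) x) (M2 := fun x => W f (fun i => x (s i)))).
- exact: W_slot.
- exact: perm_slot.
- by move=> a; rewrite !W_pure alg_equiv.
Qed.

Lemma W_unit (x : 'I_1 -> Bt) : W op_unit x = x ord0.
Proof.
apply: (uniq_slot (M1 := fun x => W op_unit x) (M2 := fun x : 'I_1 -> Bt => x ord0)).
- exact: W_slot.
- by move=> y i; rewrite (ord1 i) /upd eqxx; split.
- by move=> a; rewrite W_pure alg_unit.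
Qed.

Lemma W_gamma m (ar : 'I_m -> nat) (f : op P m) (g : forall i, op P (ar i))
  (x : 'I_(\sum_(i < m) ar i) -> Bt) :
  W (op_gamma f g) x = W f (fun i => W (g i) (fun l => x (blk l))).
Proof.
apply: (uniq_slot (M1 := fun x => W (op_gamma f g) x)
                  (M2 := fun x => W f (fun i => W (g i) (fun l => x (blk l))))).
- exact: W_slot.
- exact: gamma_slot.
- move=> a; rewrite W_pure alg_gamma.
  have -> : (fun i => W (g i) (fun l => (a (blk l), 0)))
          = fun i => (alg_act F (g i) (fun l => a (blk l)), 0).
    by apply: functional_extensionality => i; rewrite W_pure.
  by rewrite W_pure.
Qed.

Definition Balg : algebra P.
refine (@Algebra k P Bt (fun n f x => W f x) _ _ _ _ _).
- move=> n a; exact: W_lin_l.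
- move=> n f a i; exact: (proj1 (W_slot f a i)).
- exact: W_equiv.
- exact: W_unit.
- exact: W_gamma.
Defined.

End Dual.

Theorem proposition2p5 (k : comPzRingType) (P : operad k) (HP : reduced P)
  (V : lmodType k) (F : algebra P) (iota : V -> carrier F)
  (Hfree : is_free_alg iota) (lam : k)
  (phi : V -> carrier F) (Hphi : is_lin phi) :
  (exists d : carrier F -> carrier F,
     [/\ is_derivation lam d,
         (forall v, d (iota v) = phi v) &
         forall n, (0 < n)%N -> forall (f : op P n) (v : 'I_n -> V),
           d (alg_act F f (fun i => iota (v i)))
           = weighted_leibniz lam f (fun i => iota (v i)) (fun i => phi (v i))])
  /\
  (forall d1 d2 : carrier F -> carrier F,
     is_derivation lam d1 -> is_derivation lam d2 ->
     (forall v, d1 (iota v) = phi v) -> (forall v, d2 (iota v) = phi v) ->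
     forall x, d1 x = d2 x).
Proof.
case: Hfree => Hiota Huniv.
pose B := Balg F lam.
pose phi' (v : V) : carrier B := (iota v, phi v).
have Hphi' : is_lin phi'.
  by move=> c x y; apply: injective_projections => /=; rewrite ?Hiota ?Hphi.
have idF : forall h', alg_morph (A := F) (B := F) h' ->
    (forall v, h' (iota v) = iota v) -> forall x, h' x = x.
  case: (Huniv F iota Hiota) => h0 [_ _ U] h' Hm Hv x.
  rewrite (U h' Hm Hv) -(U id) //; split => //.
case: (Huniv B phi' Hphi') => h [hm hv U].
have der_morph : forall d, is_derivation lam d ->
    alg_morph (A := F) (B := B) (fun x => (x, d x)).
  move=> d [dl dd]; split.
    by move=> c x y; apply: injective_projections => /=; rewrite ?dl.
  move=> n f a; case: n f a => [|n] f a.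
    rewrite (HP f) (lin0 (alg_lin_l a)).
    have := lin0 (W_lin_l lam (fun i : 'I_0 => (a i, d (a i)))) => /= ->.
    by rewrite (lin0 dl).
  rewrite /= /W /=; congr pair; exact: dd.
split.
  have h1 : forall x, (h x).1 = x.
    apply: (idF (fun x => (h x).1)); last by move=> v; rewrite hv.
    split.
      by move=> c x y; rewrite (proj1 hm).
    by move=> n f a; rewrite (proj2 hm).
  have e1 : forall n (a : 'I_n -> carrier F), (fun i => (h (a i)).1) = a.
    by move=> n a; apply: functional_extensionality => i; rewrite h1.
  exists (fun x => (h x).2).
  have isd : is_derivation lam (fun x => (h x).2).
    split.
      by move=> c x y; rewrite (proj1 hm).
    move=> n _ f a; rewrite (proj2 hm) /= /W /= e1 //.
  split => //.
    by move=> v; rewrite hv.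
  move=> n n0 f v; rewrite (proj2 isd n n0) /=; congr (weighted_leibniz _ _ _ _).
  by apply: functional_extensionality => i; rewrite hv.
move=> d1 d2 D1 D2 E1 E2 x.
have e1 : forall v, (iota v, d1 (iota v)) = phi' v by move=> v; rewrite E1.
have e2 : forall v, (iota v, d2 (iota v)) = phi' v by move=> v; rewrite E2.
have := U _ (der_morph d1 D1) e1 x.
have := U _ (der_morph d2 D2) e2 x.
move=> A2 A1; exact: (congr1 snd (etrans A1 (esym A2))).
Qed.
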